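(* Let $\mathring{\mathcal{M}}$ denote the linear space of real symmetric trace-free $2\times2$ matrices, and let $$\Lambda = \Big\{\tfrac15(3e_1\pm 4e_2),\ \tfrac15(4e_1\pm 3e_2),\ \tfrac15(-3e_1\mp 4e_2),\ \tfrac15(-4e_1\mp 3e_2)\Big\}\subset\mathbb{S}^1.$$ There exists a family of positive smooth functions $\{\gamma_k\in C^\infty(\mathring{\mathcal{M}}) : k\in\Lambda\}$ such that for every $\mathring{R}\in\mathring{\mathcal{M}}$: $$\gamma_{-k}(\mathring{R}) = \gamma_k(\mathring{R}),\qquad \mathring{R} = \sum_{k\in\Lambda}(\gamma_k(\mathring{R}))^2\,(k\mathring{\otimes} k),\qquad \gamma_k(\mathring{R}) \le C(1+|\mathring{R}|)^{1/2}$$ for all $k\in\Lambda$, where $C$ is an absolute constant.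
   Context: For $f,g\in\mathbb{R}^2$, $f\mathring{\otimes} g$ denotes the trace-free part of the tensor product: $f\mathring{\otimes} g = \begin{pmatrix}\frac12 f_1g_1-\frac12 f_2g_2 & f_1g_2\\ f_2g_1 & \frac12 f_2g_2-\frac12 f_1g_1\end{pmatrix}$. $e_1,e_2$ are the standard basis vectors of $\mathbb{R}^2$. *)

(* Defs.v *)
From Stdlib Require Import Reals List.
From Coquelicot Require Import Coquelicot.
Import ListNotations.
Open Scope R_scope.

Definition vec2 := (R * R)%type.
Definition vopp (k : vec2) : vec2 := (- fst k, - snd k).

Record mat2 := Mat2 { m11 : R; m12 : R; m21 : R; m22 : R }.

Definition madd (A B : mat2) : mat2 :=
  Mat2 (m11 A + m11 B) (m12 A + m12 B) (m21 A + m21 B) (m22 A + m22 B).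
Definition mscale (c : R) (A : mat2) : mat2 :=
  Mat2 (c * m11 A) (c * m12 A) (c * m21 A) (c * m22 A).
Definition mzero : mat2 := Mat2 0 0 0 0.

Definition mnorm (A : mat2) : R :=
  sqrt (m11 A ^ 2 + m12 A ^ 2 + m21 A ^ 2 + m22 A ^ 2).

(* Trace-free part of the tensor product f (x) g. *)
Definition tfotimes (f g : vec2) : mat2 :=
  Mat2 (/2 * fst f * fst g - /2 * snd f * snd g) (fst f * snd g)
       (snd f * fst g) (/2 * snd f * snd g - /2 * fst f * fst g).

(* The space of real symmetric trace-free 2x2 matrices, parametrized by its
   linear coordinates (a, b) |-> [[a, b], [b, -a]] (a linear isomorphism
   R^2 ~ M°). Every element of M° is of this form. *)
Definition tfsym (a b : R) : mat2 := Mat2 a b b (- a).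
Definition is_tfsym (A : mat2) : Prop := m12 A = m21 A /\ m11 A + m22 A = 0.

Definition jcont (f : R -> R -> R) : Prop :=
  forall x y, continuous (fun p : R * R => f (fst p) (snd p)) (x, y).

Fixpoint Cn (n : nat) (f : R -> R -> R) : Prop :=
  match n with
  | O => jcont f
  | S m => jcont f /\
           (forall x y, ex_derive (fun t => f t y) x /\ ex_derive (fun t => f x t) y) /\
           Cn m (fun x y => Derive (fun t => f t y) x) /\
           Cn m (fun x y => Derive (fun t => f x t) y)
  end.

Definition smooth2 (f : R -> R -> R) : Prop := forall n, Cn n f.

(* A function on M° is smooth iff it is smooth in the linear coordinates. *)
Definition smooth_on_tfsym (g : mat2 -> R) : Prop :=
  smooth2 (fun a b => g (tfsym a b)).

Definition Lambda : list vec2 :=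
  [ (3/5, 4/5); (3/5, -(4/5)); (4/5, 3/5); (4/5, -(3/5));
    (-(3/5), -(4/5)); (-(3/5), 4/5); (-(4/5), -(3/5)); (-(4/5), 3/5) ].

Definition msum_Lambda (F : vec2 -> mat2) : mat2 :=
  fold_right (fun k acc => madd (F k) acc) mzero Lambda.

(* Main.v *)
Require Import Defs.
From Stdlib Require Import Reals List Lra FunctionalExtensionality.
From Coquelicot Require Import Coquelicot.
Open Scope R_scope.

Definition Dx (f : R -> R -> R) := fun x y => Derive (fun t => f t y) x.
Definition Dy (f : R -> R -> R) := fun x y => Derive (fun t => f x t) y.

Lemma Cn_jcont n f : Cn n f -> jcont f.
Proof. destruct n; simpl; tauto. Qed.

Lemma Cn_S n f : Cn (S n) f -> Cn n f.
Proof.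
  revert f; induction n; intros f H.
  - simpl in *; tauto.
  - destruct H as [H1 [H2 [H3 H4]]]. split; [exact H1|]. split; [exact H2|].
    split; apply IHn; assumption.
Qed.

Lemma jcont_plus f g : jcont f -> jcont g -> jcont (fun x y => f x y + g x y).
Proof. intros Hf Hg x y. apply (continuous_plus (fun p : R*R => f (fst p) (snd p)) (fun p : R*R => g (fst p) (snd p))); auto. Qed.

Lemma jcont_mult f g : jcont f -> jcont g -> jcont (fun x y => f x y * g x y).
Proof. intros Hf Hg x y. apply (continuous_mult (fun p : R*R => f (fst p) (snd p)) (fun p : R*R => g (fst p) (snd p))); auto. Qed.

Lemma jcont_inv f : jcont f -> (forall x y, f x y <> 0) -> jcont (fun x y => / f x y).
Proof. intros Hf Hn x y.
  apply (continuous_comp (fun p : R*R => f (fst p) (snd p)) Rinv); auto.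
  apply continuous_Rinv; auto. Qed.

Lemma jcont_sqrt f : jcont f -> jcont (fun x y => sqrt (f x y)).
Proof. intros Hf x y.
  apply (continuous_comp (fun p : R*R => f (fst p) (snd p)) sqrt); auto.
  apply continuous_sqrt. Qed.

Lemma jcont_const c : jcont (fun _ _ => c).
Proof. intros x y. apply continuous_const. Qed.

Lemma jcont_x : jcont (fun x _ => x).
Proof. intros x y. apply continuous_fst. Qed.

Lemma jcont_y : jcont (fun _ y => y).
Proof. intros x y. apply continuous_snd. Qed.

Lemma Cn_ext n f g : f = g -> Cn n f -> Cn n g.
Proof. intros ->; auto. Qed.

Lemma Cn_const n c : Cn n (fun _ _ => c).
Proof.
  revert c; induction n; intro c.
  - apply jcont_const.
  - split; [apply jcont_const|]. split.
    + intros; split; apply ex_derive_const.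
    + split; eapply Cn_ext; try exact (IHn 0); unfold Dx;
      apply functional_extensionality; intro; apply functional_extensionality; intro;
      symmetry; apply Derive_const.
Qed.

Lemma Cn_x n : Cn n (fun x _ => x).
Proof.
  destruct n.
  - apply jcont_x.
  - split; [apply jcont_x|]. split.
    + intros; split; [apply ex_derive_id| apply ex_derive_const].
    + split.
      * apply (Cn_ext n (fun _ _ => 1)); [|apply Cn_const].
        apply functional_extensionality; intro; apply functional_extensionality; intro;
        symmetry; apply Derive_id.
      * apply (Cn_ext n (fun _ _ => 0)); [|apply Cn_const].
        apply functional_extensionality; intro; apply functional_extensionality; intro;
        symmetry; apply Derive_const.
Qed.

Lemma Cn_y n : Cn n (fun _ y => y).
Proof.
  destruct n.
  - apply jcont_y.
  - split; [apply jcont_y|]. split.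
    + intros; split; [apply ex_derive_const| apply ex_derive_id].
    + split.
      * apply (Cn_ext n (fun _ _ => 0)); [|apply Cn_const].
        apply functional_extensionality; intro; apply functional_extensionality; intro;
        symmetry; apply Derive_const.
      * apply (Cn_ext n (fun _ _ => 1)); [|apply Cn_const].
        apply functional_extensionality; intro; apply functional_extensionality; intro;
        symmetry; apply Derive_id.
Qed.

Lemma Cn_plus n : forall f g, Cn n f -> Cn n g -> Cn n (fun x y => f x y + g x y).
Proof.
  induction n; intros f g Hf Hg.
  - apply jcont_plus; auto.
  - destruct Hf as [F1 [F2 [F3 F4]]]; destruct Hg as [G1 [G2 [G3 G4]]].
    split; [apply jcont_plus; auto|]. split.
    + intros x y; destruct (F2 x y); destruct (G2 x y); split; [apply (ex_derive_plus (fun t => f t y) (fun t => g t y))|apply (ex_derive_plus (fun t => f x t) (fun t => g x t))]; auto.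
    + split.
      * apply (Cn_ext n (fun x y => Dx f x y + Dx g x y)); [|apply IHn; auto].
        apply functional_extensionality; intro x; apply functional_extensionality; intro y.
        destruct (F2 x y); destruct (G2 x y).
        symmetry; apply (Derive_plus (fun t => f t y) (fun t => g t y)); auto.
      * apply (Cn_ext n (fun x y => Dy f x y + Dy g x y)); [|apply IHn; auto].
        apply functional_extensionality; intro x; apply functional_extensionality; intro y.
        destruct (F2 x y); destruct (G2 x y).
        symmetry; apply (Derive_plus (fun t => f x t) (fun t => g x t)); auto.
Qed.

Lemma Cn_mult n : forall f g, Cn n f -> Cn n g -> Cn n (fun x y => f x y * g x y).
Proof.
  induction n; intros f g Hf Hg.
  - apply jcont_mult; auto.
  - pose proof (Cn_S _ _ Hf) as Hf'. pose proof (Cn_S _ _ Hg) as Hg'.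
    destruct Hf as [F1 [F2 [F3 F4]]]; destruct Hg as [G1 [G2 [G3 G4]]].
    split; [apply jcont_mult; auto|]. split.
    + intros x y; destruct (F2 x y); destruct (G2 x y); split; [apply (ex_derive_mult (fun t => f t y) (fun t => g t y))|apply (ex_derive_mult (fun t => f x t) (fun t => g x t))]; auto.
    + split.
      * apply (Cn_ext n (fun x y => Dx f x y * g x y + f x y * Dx g x y));
          [|apply Cn_plus; apply IHn; auto].
        apply functional_extensionality; intro x; apply functional_extensionality; intro y.
        destruct (F2 x y); destruct (G2 x y).
        symmetry; apply (Derive_mult (fun t => f t y) (fun t => g t y)); auto.
      * apply (Cn_ext n (fun x y => Dy f x y * g x y + f x y * Dy g x y));
          [|apply Cn_plus; apply IHn; auto].
        apply functional_extensionality; intro x; apply functional_extensionality; intro y.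
        destruct (F2 x y); destruct (G2 x y).
        symmetry; apply (Derive_mult (fun t => f x t) (fun t => g x t)); auto.
Qed.

Lemma Cn_inv n : forall f, Cn n f -> (forall x y, f x y <> 0) -> Cn n (fun x y => / f x y).
Proof.
  induction n; intros f Hf Hn.
  - apply jcont_inv; auto.
  - pose proof (Cn_S _ _ Hf) as Hf'.
    destruct Hf as [F1 [F2 [F3 F4]]].
    split; [apply jcont_inv; auto|]. split.
    + intros x y; destruct (F2 x y); split; [apply (ex_derive_inv (fun t => f t y))|apply (ex_derive_inv (fun t => f x t))]; auto.
    + split.
      * apply (Cn_ext n (fun x y => (fun _ _ => -1) x y * Dx f x y * ((fun x y => / f x y) x y * (fun x y => / f x y) x y)));
          [|apply (Cn_mult n (fun x y => -1 * Dx f x y)); [apply Cn_mult; auto; apply Cn_const|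
             apply Cn_mult; apply IHn; auto]].
        apply functional_extensionality; intro x; apply functional_extensionality; intro y.
        destruct (F2 x y).
        unfold Dx. rewrite (Derive_inv (fun t => f t y)); auto.
        specialize (Hn x y). field. auto.
      * apply (Cn_ext n (fun x y => (fun _ _ => -1) x y * Dy f x y * ((fun x y => / f x y) x y * (fun x y => / f x y) x y)));
          [|apply (Cn_mult n (fun x y => -1 * Dy f x y)); [apply Cn_mult; auto; apply Cn_const|
             apply Cn_mult; apply IHn; auto]].
        apply functional_extensionality; intro x; apply functional_extensionality; intro y.
        destruct (F2 x y).
        unfold Dy. rewrite (Derive_inv (fun t => f x t)); auto.
        specialize (Hn x y). field. auto.
Qed.

Lemma Cn_sqrt n : forall f, Cn n f -> (forall x y, 0 < f x y) -> Cn n (fun x y => sqrt (f x y)).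
Proof.
  induction n; intros f Hf Hp.
  - apply jcont_sqrt; auto.
  - pose proof (Cn_S _ _ Hf) as Hf'.
    destruct Hf as [F1 [F2 [F3 F4]]].
    assert (Hs : Cn n (fun x y => sqrt (f x y))) by (apply IHn; auto).
    assert (Hi : Cn n (fun x y => / sqrt (f x y))).
    { apply Cn_inv; auto. intros x y. apply Rgt_not_eq, sqrt_lt_R0, Hp. }
    split; [apply jcont_sqrt; auto|]. split.
    + intros x y; destruct (F2 x y) as [[dx Hdx] [dy Hdy]]; split.
      * eexists. apply (is_derive_sqrt (fun t => f t y)); eauto.
      * eexists. apply (is_derive_sqrt (fun t => f x t)); eauto.
    + split.
      * apply (Cn_ext n (fun x y => Dx f x y * ((fun _ _ => /2) x y * (fun x y => / sqrt (f x y)) x y)));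
          [|apply Cn_mult; auto; apply Cn_mult; auto; apply Cn_const].
        apply functional_extensionality; intro x; apply functional_extensionality; intro y.
        destruct (F2 x y) as [Hd _].
        unfold Dx. symmetry. apply is_derive_unique.
        pose proof (is_derive_sqrt (fun t => f t y) x _ (Derive_correct _ _ Hd) (Hp x y)) as H.
        simpl in H. replace (Derive (fun t => f t y) x * (/ 2 * / sqrt (f x y)))
          with (Derive (fun t => f t y) x / (2 * sqrt (f x y))); auto.
        assert (0 < sqrt (f x y)) by (apply sqrt_lt_R0, Hp). field; lra.
      * apply (Cn_ext n (fun x y => Dy f x y * ((fun _ _ => /2) x y * (fun x y => / sqrt (f x y)) x y)));
          [|apply Cn_mult; auto; apply Cn_mult; auto; apply Cn_const].
        apply functional_extensionality; intro x; apply functional_extensionality; intro y.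
        destruct (F2 x y) as [_ Hd].
        unfold Dy. symmetry. apply is_derive_unique.
        pose proof (is_derive_sqrt (fun t => f x t) y _ (Derive_correct _ _ Hd) (Hp x y)) as H.
        simpl in H. replace (Derive (fun t => f x t) y * (/ 2 * / sqrt (f x y)))
          with (Derive (fun t => f x t) y / (2 * sqrt (f x y))); auto.
        assert (0 < sqrt (f x y)) by (apply sqrt_lt_R0, Hp). field; lra.
Qed.

Definition Nf (a b : R) := 2 * sqrt (1 + a * a + b * b).
Definition wk (k : vec2) (a b : R) :=
  Nf a b + 625/196 * (fst k * fst k - snd k * snd k) * a + 625/1152 * (fst k * snd k) * b.
Definition gam (k : vec2) (M : mat2) := sqrt (wk k (m11 M) (m12 M)).

Lemma s_facts a b : let s := sqrt (1 + a * a + b * b) in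
  0 < s /\ -s < a < s /\ -s < b < s.
Proof.
  intro s.
  assert (H1 : 0 < 1 + a * a + b * b) by nra.
  assert (Hs : 0 < s) by (apply sqrt_lt_R0; auto).
  assert (Hs2 : s * s = 1 + a * a + b * b) by (apply sqrt_sqrt; lra).
  split; [auto|]. split; split; nra.
Qed.

Lemma wk_pos k a b : In k Lambda -> 0 < wk k a b.
Proof.
  intro Hk. destruct (s_facts a b) as [H1 [[H2 H3] [H4 H5]]].
  unfold wk, Nf.
  set (s := sqrt (1 + a * a + b * b)) in *.
  simpl in Hk.
  repeat (destruct Hk as [Hk|Hk]; [subst k; simpl; lra|]). contradiction.
Qed.

Lemma Cn_wk n k : Cn n (wk k).
Proof.
  unfold wk, Nf.
  apply Cn_plus; [apply Cn_plus|].
  - apply Cn_mult; [apply Cn_const|]. apply Cn_sqrt.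
    + apply Cn_plus; [apply Cn_plus|]; [apply Cn_const| apply Cn_mult; apply Cn_x| apply Cn_mult; apply Cn_y].
    + intros; nra.
  - apply Cn_mult; [apply Cn_const| apply Cn_x].
  - apply Cn_mult; [apply Cn_const| apply Cn_y].
Qed.

Lemma sq_gam k M : In k Lambda -> gam k M ^ 2 = wk k (m11 M) (m12 M).
Proof. intro Hk. unfold gam. apply pow2_sqrt. left. apply wk_pos; auto. Qed.

Lemma in_L k : In k Lambda -> In k Lambda. Proof. auto. Qed.

Lemma mat2_eq A B : m11 A = m11 B -> m12 A = m12 B -> m21 A = m21 B -> m22 A = m22 B -> A = B.
Proof. destruct A, B; simpl; intros; subst; reflexivity. Qed.
Lemma m11_madd A B : m11 (madd A B) = m11 A + m11 B. Proof. reflexivity. Qed.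
Lemma m12_madd A B : m12 (madd A B) = m12 A + m12 B. Proof. reflexivity. Qed.
Lemma m21_madd A B : m21 (madd A B) = m21 A + m21 B. Proof. reflexivity. Qed.
Lemma m22_madd A B : m22 (madd A B) = m22 A + m22 B. Proof. reflexivity. Qed.

Theorem lemma4p1 :
  exists (C : R) (gamma : vec2 -> mat2 -> R),
    (forall k, In k Lambda -> smooth_on_tfsym (gamma k)) /\
    forall Rm : mat2, is_tfsym Rm ->
      (forall k, In k Lambda -> 0 < gamma k Rm) /\
      (forall k, In k Lambda -> gamma (vopp k) Rm = gamma k Rm) /\
      Rm = msum_Lambda (fun k => mscale ((gamma k Rm) ^ 2) (tfotimes k k)) /\
      (forall k, In k Lambda -> gamma k Rm <= C * sqrt (1 + mnorm Rm)).
Proof.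
  exists 2, gam. split.
  - intros k Hk n. unfold smooth_on_tfsym, gam. simpl.
    apply Cn_sqrt; [apply Cn_wk|]. intros; apply wk_pos; auto.
  - intros Rm HR. split; [|split; [|split]].
    + intros k Hk. unfold gam. apply sqrt_lt_R0, wk_pos; auto.
    + intros k Hk. unfold gam, wk, vopp. simpl. f_equal. ring.
    + unfold msum_Lambda, Lambda. cbn [fold_right].
      rewrite (sq_gam (3/5, 4/5)) by (unfold Lambda; cbn [In]; tauto).
      rewrite (sq_gam (3/5, -(4/5))) by (unfold Lambda; cbn [In]; tauto).
      rewrite (sq_gam (4/5, 3/5)) by (unfold Lambda; cbn [In]; tauto).
      rewrite (sq_gam (4/5, -(3/5))) by (unfold Lambda; cbn [In]; tauto).
      rewrite (sq_gam (-(3/5), -(4/5))) by (unfold Lambda; cbn [In]; tauto).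
      rewrite (sq_gam (-(3/5), 4/5)) by (unfold Lambda; cbn [In]; tauto).
      rewrite (sq_gam (-(4/5), -(3/5))) by (unfold Lambda; cbn [In]; tauto).
      rewrite (sq_gam (-(4/5), 3/5)) by (unfold Lambda; cbn [In]; tauto).
      destruct Rm as [a b c d]; destruct HR as [H1 H2]; cbn [m11 m12 m21 m22] in *.
      assert (d = - a) by lra. subst c d.
      apply mat2_eq;
        rewrite ?m11_madd, ?m12_madd, ?m21_madd, ?m22_madd;
        unfold wk, Nf, mscale, tfotimes, mzero; cbn [fst snd m11 m12 m21 m22];
        field.
    + intros k Hk. destruct Rm as [a b c d]; destruct HR as [H1 H2]; cbn [m11 m12 m21 m22] in *.
      assert (d = - a) by lra. subst c d.
      unfold gam, mnorm; cbn [m11 m12 m21 m22].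
      destruct (s_facts a b) as [F1 [[F2 F3] [F4 F5]]].
      assert (Hs2 : sqrt (1 + a * a + b * b) * sqrt (1 + a * a + b * b) = 1 + a * a + b * b)
        by (apply sqrt_sqrt; nra).
      set (s := sqrt (1 + a * a + b * b)) in *.
      set (S := sqrt (a ^ 2 + b ^ 2 + b ^ 2 + (- a) ^ 2)).
      assert (HS0 : 0 <= S) by apply sqrt_pos.
      assert (HS2 : S * S = a ^ 2 + b ^ 2 + b ^ 2 + (- a) ^ 2) by (apply sqrt_sqrt; nra).
      assert (Ha : -S <= a <= S) by (split; nra).
      assert (Hb : -S <= b <= S) by (split; nra).
      assert (Hs : s <= 1 + S) by nra.
      assert (Hw : wk k a b <= 4 * (1 + S)).
      { unfold wk, Nf. fold s. simpl in Hk.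
        repeat (destruct Hk as [Hk|Hk]; [subst k; simpl; lra|]). contradiction. }
      assert (HT0 : 0 <= sqrt (1 + S)) by apply sqrt_pos.
      assert (HT2 : sqrt (1 + S) * sqrt (1 + S) = 1 + S) by (apply sqrt_sqrt; lra).
      rewrite <- (sqrt_square (2 * sqrt (1 + S))) by lra.
      apply sqrt_le_1_alt. nra.
Qed.
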